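(* Let $(\gamma_\nu)_{\nu\ge 0}$ be complex numbers, let $f(z)=\sum_{\nu=0}^{\infty}\gamma_\nu z^\nu$ be the corresponding formal power series, and let $f_n(z)=\sum_{\nu=0}^{n}\gamma_\nu z^\nu$. Work in the field $\mathbb{C}((z))$ of formal Laurent series. Define numbers $\mathcal{C}_k^{(n)}$ by $\mathcal{C}_0^{(n)}=-\gamma_{n+1}$ and $\mathcal{C}_{k+1}^{(n)}=\mathcal{C}_k^{(n+3)}-\dfrac{\mathcal{C}_k^{(n+2)}\bigl\{2\mathcal{C}_k^{(n)}\mathcal{C}_k^{(n+2)}-[\mathcal{C}_k^{(n+1)}]^2\bigr\}}{\mathcal{C}_k^{(n)}\mathcal{C}_k^{(n+1)}}$ for $k,n\in\mathbb{N}_0$, and assume $\mathcal{C}_k^{(n)}\neq0$ for all $k,n\in\mathbb{N}_0$. Let $\mathcal{J}_k^{(n)}$ be the iterated theta algorithm applied to $s_n=f_n(z)$: $\mathcal{J}_0^{(n)}=f_n(z)$, $\mathcal{J}_{k+1}^{(n)}=\mathcal{J}_k^{(n+1)}-\dfrac{[\Delta\mathcal{J}_k^{(n)}][\Delta\mathcal{J}_k^{(n+1)}][\Delta^2\mathcal{J}_k^{(n+1)}]}{[\Delta\mathcal{J}_k^{(n+2)}][\Delta^2\mathcal{J}_k^{(n)}]-[\Delta\mathcal{J}_k^{(n)}][\Delta^2\mathcal{J}_k^{(n+1)}]}$, where $\Delta$ acts on the superscript, $\Delta\mathcal{J}_k^{(n)}=\mathcal{J}_k^{(n+1)}-\mathcal{J}_k^{(n)}$.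 Then all $\mathcal{J}_k^{(n)}$ are well defined elements of $\mathbb{C}[[z]]$, and for all $k,n\in\mathbb{N}_0$: (i) $\mathcal{J}_k^{(n)}=f(z)+z^{n+3k+1}\mathcal{R}_k^{(n)}(z)$ with $\mathcal{R}_k^{(n)}(z)\in\mathbb{C}[[z]]$ having constant term $\mathcal{C}_k^{(n)}$; in particular $f(z)-\mathcal{J}_k^{(n)}=O(z^{n+3k+1})$; (ii) $\mathcal{J}_k^{(n)}=f_{n+3k}(z)+\mathcal{G}_k^{(n)}z^{n+3k+1}+O(z^{n+3k+2})$, where $\mathcal{G}_k^{(n)}=\mathcal{C}_k^{(n)}+\gamma_{n+3k+1}$ and $\mathcal{G}_0^{(n)}=0$, $\mathcal{G}_1^{(n)}=-\gamma_{n+3}\bigl\{\gamma_{n+2}^2-2\gamma_{n+1}\gamma_{n+3}\bigr\}/(\gamma_{n+1}\gamma_{n+2})$, and $\mathcal{G}_{k+1}^{(n)}=\mathcal{G}_k^{(n+3)}-F_{k+1}^{(n)}/H_{k+1}^{(n)}$ with $F_{k+1}^{(n)}=\bigl[\gamma_{n+3k+3}-\mathcal{G}_k^{(n+2)}\bigr]\Bigl\{\bigl[\gamma_{n+3k+2}-\mathcal{G}_k^{(n+1)}\bigr]^2-2\bigl[\gamma_{n+3k+1}-\mathcal{G}_k^{(n)}\bigr]\bigl[\gamma_{n+3k+3}-\mathcal{G}_k^{(n+2)}\bigr]\Bigr\}$ and $H_{k+1}^{(n)}=\bigl[\gamma_{n+3k+1}-\mathcal{G}_k^{(n)}\bigr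]\bigl[\gamma_{n+3k+2}-\mathcal{G}_k^{(n+1)}\bigr]$.
   Context: $\mathbb{N}_0=\{0,1,2,\dots\}$. $O(z^m)$ denotes an element of $z^m\mathbb{C}[[z]]$. The number $\mathcal{G}_k^{(n)}$ is interpreted as the prediction for the coefficient $\gamma_{n+3k+1}$, the first coefficient not used in computing $\mathcal{J}_k^{(n)}$ (which uses $f_n,\dots,f_{n+3k}$). *)

(* Defs.v *)
From HB Require Import structures.
From mathcomp Require Import all_boot all_order all_algebra.
From mathcomp Require Import complex.
From mathcomp Require Import reals Rstruct.
Set Implicit Arguments. Unset Strict Implicit. Unset Printing Implicit Defensive.
Import Order.TTheory GRing.Theory Num.Theory.
Local Open Scope ring_scope.

Definition C : fieldType := (Rdefinitions.R)[i].

(** Formal power series in C[[z]], represented by their coefficient sequences: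
    s i is the coefficient of z^i. *)
Definition series := nat -> C.

Definition szero : series := fun _ => 0.
Definition sadd (a b : series) : series := fun m => a m + b m.
Definition sopp (a : series) : series := fun m => - a m.
Definition ssub (a b : series) : series := fun m => a m - b m.
Definition smul (a b : series) : series :=
  fun m => \sum_(i < m.+1) a i * b (m - i)%N.
Definition smono (c : C) (e : nat) : series := fun m => if m == e then c else 0.
Definition sshift (e : nat) (a : series) : series :=
  fun m => if (e <= m)%N then a (m - e)%N else 0.
Definition sO (m : nat) (s : series) : Prop := forall i, (i < m)%N -> s i = 0.

Definition fser (g : nat -> C) : series := g.
Definition fpart (g : nat -> C) (n : nat) : series :=
  fun m => if (m <= n)%N then g m else 0.

Fixpoint Ccoef (g : nat -> C) (k : nat) : nat -> C :=
  match k with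
  | 0 => fun n => - g n.+1
  | k'.+1 => fun n =>
      let c := Ccoef g k' in
      c (n + 3)%N -
      c (n + 2)%N * (2 * c n * c (n + 2)%N - (c (n + 1)%N) ^+ 2)
        / (c n * c (n + 1)%N)
  end.

Definition Gcoef (g : nat -> C) (k n : nat) : C := Ccoef g k n + g (n + 3 * k + 1)%N.

Definition Fcoef (g : nat -> C) (k n : nat) : C :=
  (g (n + 3 * k + 3)%N - Gcoef g k (n + 2))
  * ((g (n + 3 * k + 2)%N - Gcoef g k (n + 1)) ^+ 2
     - 2 * (g (n + 3 * k + 1)%N - Gcoef g k n) * (g (n + 3 * k + 3)%N - Gcoef g k (n + 2))).
Definition Hcoef (g : nat -> C) (k n : nat) : C :=
  (g (n + 3 * k + 1)%N - Gcoef g k n) * (g (n + 3 * k + 2)%N - Gcoef g k (n + 1)).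

(** Ingredients of one step of the theta algorithm applied to a column
    T : nat -> series (T n = J_k^(n) for fixed k).  Delta acts on n. *)
Definition dlt (T : nat -> series) (n : nat) : series := ssub (T n.+1) (T n).
Definition dlt2 (T : nat -> series) (n : nat) : series := ssub (dlt T n.+1) (dlt T n).
Definition theta_num (T : nat -> series) (n : nat) : series :=
  smul (smul (dlt T n) (dlt T n.+1)) (dlt2 T n.+1).
Definition theta_den (T : nat -> series) (n : nat) : series :=
  ssub (smul (dlt T n.+2) (dlt2 T n)) (smul (dlt T n) (dlt2 T n.+1)).

(* Main.v *)
Require Import Defs.
From HB Require Import structures.
From mathcomp Require Import all_boot all_order all_algebra.
From mathcomp Require Import ring zify.
From Stdlib Require Import FunctionalExtensionality.
Set Implicit Arguments. Unset Strict Implicit. Unset Printing Implicit Defensive.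
Import Order.TTheory GRing.Theory Num.Theory.
Local Open Scope ring_scope.

Lemma smul_rev (a b : series) m :
  smul a b m = \sum_(i < m.+1) a (m - i)%N * b i.
Proof.
rewrite /smul (reindex_inj rev_ord_inj) /=.
by apply: eq_bigr => j _; rewrite (sub_ordK j).
Qed.

Lemma smulC a b : smul a b = smul b a.
Proof.
apply: functional_extensionality => m; rewrite smul_rev /smul.
by apply: eq_bigr => i _; rewrite mulrC.
Qed.

Lemma smulA a b c : smul a (smul b c) = smul (smul a b) c.
Proof.
apply: functional_extensionality => i.
rewrite {1}/smul smul_rev.
pose coef3 j k := a j * (b (i - j - k)%N * c k).
transitivity (\sum_(j < i.+1) \sum_(k < i.+1 | (k <= i - j)%N) coef3 j k).
  apply: eq_bigr => /= j _; rewrite smul_rev big_distrr /=.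
  by rewrite (big_ord_narrow_leq (leq_subr _ _)).
rewrite (exchange_big_dep predT) //=; apply: eq_bigr => k _.
transitivity (\sum_(j < i.+1 | (j <= i - k)%N) coef3 j k).
  apply: eq_bigl => j; rewrite -ltnS -(ltnS j) -!subSn ?leq_ord //.
  by rewrite -subn_gt0 -(subn_gt0 j) -!subnDA addnC.
rewrite (big_ord_narrow_leq (leq_subr _ _)) /smul big_distrl /=.
by apply: eq_bigr => j _; rewrite /coef3 -!subnDA addnC mulrA.
Qed.

Lemma smulBl a b c : smul (ssub a b) c = ssub (smul a c) (smul b c).
Proof.
apply: functional_extensionality => m; rewrite /smul /ssub -sumrB.
by apply: eq_bigr => i _; rewrite mulrBl.
Qed.

Lemma smul_1l a : smul (smono 1 0) a = a.
Proof.
apply: functional_extensionality => m; rewrite /smul big_ord_recl subn0.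
rewrite big1 ?addr0 => [|i _]; rewrite /smono /=.
  by rewrite mul1r.
by rewrite mul0r.
Qed.

Lemma smul_1r a : smul a (smono 1 0) = a.
Proof. by rewrite smulC smul_1l. Qed.

Lemma sshift0 a : sshift 0 a = a.
Proof. by apply: functional_extensionality => m; rewrite /sshift subn0. Qed.

Lemma sshift1S a i : sshift 1 a i.+1 = a i.
Proof. by rewrite /sshift /= subn1. Qed.

Lemma sshift1_0 a : sshift 1 a 0 = 0.
Proof. by []. Qed.

Lemma sshiftS p a : sshift p.+1 a = sshift 1 (sshift p a).
Proof.
apply: functional_extensionality => m; case: m => [|m] //.
by rewrite sshift1S /sshift ltnS subSS.
Qed.

Lemma sshift_add p q a : sshift (p + q) a = sshift p (sshift q a).
Proof.
elim: p => [|p IH]; first by rewrite add0n sshift0.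
by rewrite addSn sshiftS IH -sshiftS.
Qed.

Lemma ssub_shift p a b : ssub (sshift p a) (sshift p b) = sshift p (ssub a b).
Proof.
apply: functional_extensionality => m; rewrite /ssub /sshift.
by case: ifP; rewrite ?subr0.
Qed.

Lemma smul_shift1l a b : smul (sshift 1 a) b = sshift 1 (smul a b).
Proof.
apply: functional_extensionality => m; case: m => [|m].
  by rewrite /smul big_ord1 sshift1_0 mul0r.
rewrite sshift1S /smul big_ord_recl sshift1_0 mul0r add0r.
by apply: eq_bigr => i _; rewrite /= sshift1S subSS.
Qed.

Lemma smul_shiftl p a b : smul (sshift p a) b = sshift p (smul a b).
Proof.
elim: p => [|p IH]; first by rewrite !sshift0.
by rewrite sshiftS smul_shift1l IH -sshiftS.
Qed.

Lemma smul_shift p q a b : smul (sshift p a) (sshift q b) = sshift (p + q) (smul a b).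
Proof.
by rewrite smul_shiftl smulC smul_shiftl smulC sshift_add.
Qed.

Lemma ssubE a b i : ssub a b i = a i - b i. Proof. by []. Qed.
Lemma smul0 a b : smul a b 0 = a 0%N * b 0%N.
Proof. by rewrite /smul big_ord1. Qed.
Lemma smul1 a b : smul a b 1 = a 0%N * b 1%N + a 1%N * b 0%N.
Proof. by rewrite /smul !big_ord_recl big_ord0 /= addr0. Qed.
Lemma smul2 a b : smul a b 2 = a 0%N * b 2%N + a 1%N * b 1%N + a 2%N * b 0%N.
Proof. by rewrite /smul !big_ord_recl big_ord0 /= addr0 addrA. Qed.

Fixpoint sinv_aux (a : series) (m : nat) : series :=
  match m with
  | 0 => fun _ => (a 0%N)^-1
  | m'.+1 => fun i => if (i <= m')%N then sinv_aux a m' i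
       else - (a 0%N)^-1 * \sum_(j < i) a j.+1 * sinv_aux a m' (i - j.+1)%N
  end.
Definition sinv (a : series) : series := fun i => sinv_aux a i i.

Lemma sinv_aux_stable a m i : (i <= m)%N -> sinv_aux a m i = sinv a i.
Proof.
elim: m => [|m IH] hi.
  by move: hi; rewrite leqn0 => /eqP ->.
rewrite /=; case: ifP => h; first exact: IH.
have -> : i = m.+1 by lia.
by rewrite /sinv /= ltnn.
Qed.

Lemma sinvS a m : sinv a m.+1 =
  - (a 0%N)^-1 * \sum_(j < m.+1) a j.+1 * sinv a (m - j)%N.
Proof.
rewrite {1}/sinv /= ltnn; f_equal; apply: eq_bigr => j _.
by rewrite subSS sinv_aux_stable // leq_subr.
Qed.

Lemma smul_sinv a : a 0%N != 0 -> smul a (sinv a) = smono 1 0.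
Proof.
move=> ha; apply: functional_extensionality => m; case: m => [|m].
  by rewrite smul0 /sinv /= mulfV.
rewrite /smul big_ord_recl subn0 sinvS /smono /=.
rewrite mulrA mulrN mulfV // mulN1r.
under [X in _ + X]eq_bigr => i _ do rewrite subSS.
by rewrite addNr.
Qed.

Lemma sinv0 a : sinv a 0 = (a 0%N)^-1.
Proof. by []. Qed.
Definition Aof (R0 R1 : series) : series := ssub (sshift 1 R1) R0.
Definition Aseq (R : nat -> series) n := Aof (R n) (R n.+1).
Definition Bseq (R : nat -> series) n := Aof (Aseq R n) (Aseq R n.+1).
Definition Dseq (R : nat -> series) n : series :=
  ssub (sshift 1 (smul (Aseq R n.+2) (Bseq R n))) (smul (Aseq R n) (Bseq R n.+1)).
Definition Nseq (R : nat -> series) n : series :=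
  smul (smul (Aseq R n) (Aseq R n.+1)) (Bseq R n.+1).
Definition Qof (R : nat -> series) n : series :=
  ssub (smul (R n.+1) (Dseq R n)) (Nseq R n).

Lemma core (R : nat -> series) n :
  [/\ Qof R n 0%N = 0, Qof R n 1%N = 0 &
   Qof R n 2%N = R n.+3 0%N * (R n 0%N * R n.+1 0%N)
      - R n.+2 0%N * (2 * R n 0%N * R n.+2 0%N - R n.+1 0%N ^+ 2)].
Proof.
rewrite /Qof /Nseq /Dseq /Bseq /Aseq /Aof.
split; rewrite ?(ssubE, smul0, smul1, smul2, sshift1S, sshift1_0); ring.
Qed.

Lemma D0 (R : nat -> series) n : Dseq R n 0%N = R n 0%N * R n.+1 0%N.
Proof.
rewrite /Dseq /Bseq /Aseq /Aof ssubE sshift1_0 smul0 !ssubE !sshift1_0; ring.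
Qed.

Definition Rof (g : nat -> C) (m : nat) (T : nat -> series) (n : nat) : series :=
  fun i => T n (i + (m + n))%N - g (i + (m + n))%N.

Definition thetaStep g m (T : nat -> series) n : series :=
  ssub (T n.+1) (sshift (m + n).+1
     (smul (Nseq (Rof g m T) n) (sinv (Dseq (Rof g m T) n)))).

Definition Cnext (c0 c1 c2 c3 : C) : C :=
  c3 - c2 * (2 * c0 * c2 - c1 ^+ 2) / (c0 * c1).

Lemma Rof_eq g m T n X :
  T n = sadd (fser g) (sshift (m + n) X) -> Rof g m T n = X.
Proof.
move=> h; apply: functional_extensionality => i.
rewrite /Rof h /sadd /sshift /fser leq_addl addnK; ring.
Qed.

Lemma ssub_sadd f x y : ssub (sadd f x) (sadd f y) = ssub x y.
Proof. by apply: functional_extensionality => i; rewrite /ssub /sadd; ring. Qed.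

Lemma ssub_sadd2 f x y : ssub (sadd f x) y = sadd f (ssub x y).
Proof. by apply: functional_extensionality => i; rewrite /ssub /sadd; ring. Qed.

Lemma shiftS_sub p x y : ssub (sshift p.+1 x) (sshift p y) = sshift p (Aof y x).
Proof. by rewrite -addn1 sshift_add ssub_shift. Qed.

Lemma shift2_of (q : series) : q 0%N = 0 -> q 1%N = 0 ->
  q = sshift 2 (fun i => q (i + 2)%N).
Proof.
move=> h0 h1; apply: functional_extensionality => i.
case: i => [|[|i]] //; by rewrite /sshift /= subn2 addn2.
Qed.

Definition Inv g m (T : nat -> series) :=
  forall n, T n = sadd (fser g) (sshift (m + n) (Rof g m T n)).

Lemma step g m m' (T : nat -> series) : m' = (m + 3)%N -> Inv g m T ->
  (forall n, Rof g m T n 0%N != 0) ->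
  (forall n, theta_den T n <> szero /\
     smul (thetaStep g m T n) (theta_den T n)
       = ssub (smul (T n.+1) (theta_den T n)) (theta_num T n)) /\
  Inv g m' (thetaStep g m T) /\
  (forall n, Rof g m' (thetaStep g m T) n 0%N =
     Cnext (Rof g m T n 0%N) (Rof g m T n.+1 0%N) (Rof g m T n.+2 0%N) (Rof g m T n.+3 0%N)).
Proof.
move=> hm' hT hnz.
set R := Rof g m T.
have hdlt n : dlt T n = sshift (m + n) (Aseq R n).
  by rewrite /dlt (hT n.+1) (hT n) ssub_sadd addnS shiftS_sub.
have hdlt2 n : dlt2 T n = sshift (m + n) (Bseq R n).
  by rewrite /dlt2 !hdlt addnS shiftS_sub.
have hnum n : theta_num T n = sshift (3 * (m + n) + 2) (Nseq R n).
  rewrite /theta_num !hdlt hdlt2 !smul_shift; congr (sshift _ _); lia.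
have hden n : theta_den T n = sshift (2 * (m + n) + 1) (Dseq R n).
  rewrite /theta_den !hdlt !hdlt2 !smul_shift.
  have -> : (m + n.+2 + (m + n) = (2 * (m + n) + 1) + 1)%N by lia.
  have -> : (m + n + (m + n.+1) = (2 * (m + n) + 1))%N by lia.
  by rewrite sshift_add ssub_shift.
have hDne n : Dseq R n 0%N != 0 by rewrite D0 mulf_neq0.
have hinv n : smul (Dseq R n) (sinv (Dseq R n)) = smono 1 0 by rewrite smul_sinv.
split.
  move=> n; split.
    move=> h; have := congr1 (fun s => s (2 * (m + n) + 1)%N) h.
    rewrite hden /sshift leqnn subnn /szero => /eqP; exact/negP.
  have key : smul (sshift (m + n).+1 (smul (Nseq R n) (sinv (Dseq R n)))) (theta_den T n)
     = theta_num T n.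
    rewrite hden hnum smul_shift -smulA (smulC (sinv _)) hinv smul_1r.
    congr (sshift _ _); lia.
  by rewrite /thetaStep smulBl key.
have hS n : thetaStep g m T n = sadd (fser g) (sshift (m' + n)
     (smul (fun i => Qof R n (i + 2)%N) (sinv (Dseq R n)))).
  have [q0 q1 _] := core R n.
  have hQ : ssub (R n.+1) (smul (Nseq R n) (sinv (Dseq R n)))
          = smul (Qof R n) (sinv (Dseq R n)).
    by rewrite /Qof smulBl -smulA hinv smul_1r.
  rewrite /thetaStep -/R (hT n.+1) ssub_sadd2 addnS ssub_shift -/R hQ.
  rewrite {1}(shift2_of q0 q1) smul_shiftl -sshift_add; congr (sadd _ (sshift _ _)).
  lia.
have hR k : Rof g m' (thetaStep g m T) k =
     smul (fun i => Qof R k (i + 2)%N) (sinv (Dseq R k)) by exact: (Rof_eq (hS k)).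
split.
  by move=> n; rewrite {1}hS hR.
move=> n; rewrite hR smul0 sinv0.
have [_ _ q2] := core R n.
rewrite q2 D0 /Cnext.
have h0 := hnz n; have h1 := hnz n.+1.
by rewrite mulrBl mulfK // mulf_neq0.
Qed.
Fixpoint Jf (g : nat -> C) (k : nat) : nat -> series :=
  match k with
  | 0 => fpart g
  | k'.+1 => thetaStep g (3 * k' + 1) (Jf g k')
  end.

Lemma CcoefS g k n : Ccoef g k.+1 n =
  Cnext (Ccoef g k n) (Ccoef g k n.+1) (Ccoef g k n.+2) (Ccoef g k n.+3).
Proof. by rewrite /= addn1 addn2 addn3. Qed.

Lemma Jinv g (hC : forall k n : nat, Ccoef g k n != 0) k :
  Inv g (3 * k + 1) (Jf g k) /\
  (forall n, Rof g (3 * k + 1) (Jf g k) n 0%N = Ccoef g k n).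
Proof.
elim: k => [|k [IH1 IH2]].
  split.
    move=> n; apply: functional_extensionality => i.
    rewrite /= /sadd /sshift /Rof /fpart /fser.
    case: (leqP i n) => h.
      by rewrite addr0.
    have e : (i - (3 * 0 + 1 + n) + (3 * 0 + 1 + n) = i)%N by lia.
    rewrite e ifF; last by apply/negbTE; rewrite -ltnNge.
    by rewrite add0r addrN.
  by move=> n; rewrite /Rof /= /fpart add0n add1n ltnn sub0r.
have hnz n : Rof g (3 * k + 1) (Jf g k) n 0%N != 0 by rewrite IH2.
have hm : (3 * k.+1 + 1 = 3 * k + 1 + 3)%N by lia.
have [_ [I1 I2]] := step hm IH1 hnz.
split; first exact: I1.
by move=> n; rewrite I2 !IH2 CcoefS.
Qed.

Lemma G1alg (a1 a2 a3 a4 : C) : a1 != 0 -> a2 != 0 ->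
  Cnext (- a1) (- a2) (- a3) (- a4) + a4 =
  - a3 * (a2 ^+ 2 - 2 * a1 * a3) / (a1 * a2).
Proof. move=> h1 h2; rewrite /Cnext; field; by rewrite ?oppr_eq0 h1 h2. Qed.

Lemma Galg (c0 c1 c2 c3 x : C) : c0 != 0 -> c1 != 0 ->
  Cnext c0 c1 c2 c3 + x =
  c3 + x - (- c2 * ((- c1) ^+ 2 - 2 * (- c0) * (- c2))) / ((- c0) * (- c1)).
Proof. move=> h0 h1; rewrite /Cnext; field; by rewrite ?oppr_eq0 h0 h1. Qed.

Lemma gsub (x y : C) : y - (x + y) = - x.
Proof. by rewrite opprD addrCA subrr addr0. Qed.

Unset Implicit Arguments.

Theorem mainTheorem2 (g : nat -> C)
  (hC : forall k n : nat, Ccoef g k n != 0) :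
  exists J : nat -> nat -> series,
    (forall n, J 0%N n = fpart g n) /\
    (forall k n, theta_den (J k) n <> szero /\
       smul (J k.+1 n) (theta_den (J k) n)
       = ssub (smul (J k n.+1) (theta_den (J k) n)) (theta_num (J k) n)) /\
    (forall k n,
      (exists Rs : series,
         J k n = sadd (fser g) (sshift (n + 3 * k + 1) Rs) /\ Rs 0%N = Ccoef g k n) /\
      sO (n + 3 * k + 1) (ssub (fser g) (J k n)) /\
      sO (n + 3 * k + 2)
         (ssub (J k n) (sadd (fpart g (n + 3 * k)) (smono (Gcoef g k n) (n + 3 * k + 1)))) /\
      Gcoef g 0 n = 0 /\
      Gcoef g 1 n = - g (n + 3)%N * ((g (n + 2)%N) ^+ 2 - 2 * g (n + 1)%N * g (n + 3)%N)
                    / (g (n + 1)%N * g (n + 2)%N) /\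
      Gcoef g k.+1 n = Gcoef g k (n + 3) - Fcoef g k n / Hcoef g k n).
Proof.
exists (Jf g); split; first by [].
split.
  move=> k n; have [IH1 IH2] := Jinv hC k.
  have hnz j : Rof g (3 * k + 1) (Jf g k) j 0%N != 0 by rewrite IH2.
  have hm : (3 * k.+1 + 1 = 3 * k + 1 + 3)%N by lia.
  have [S _] := step hm IH1 hnz.
  exact: S n.
move=> k n; have [IH1 IH2] := Jinv hC k.
set Rs := Rof g (3 * k + 1) (Jf g k) n.
have hJ : Jf g k n = sadd (fser g) (sshift (n + 3 * k + 1) Rs).
  rewrite {1}IH1; congr (sadd _ (sshift _ _)); lia.
split; first by exists Rs; split => //; exact: IH2.
split.
  move=> i hi; rewrite hJ /ssub /sadd /sshift /fser ifF; last first.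
    by apply/negbTE; rewrite -ltnNge.
  by rewrite addr0 subrr.
split.
  move=> i hi; rewrite hJ /ssub /sadd /sshift /fpart /smono /fser /Gcoef.
  case: (ltnP i (n + 3 * k + 1)) => h.
    rewrite ifT; last by lia.
    rewrite ifF; last by apply/eqP; lia.
    by rewrite addr0 subrr.
  have -> : i = (n + 3 * k + 1)%N by lia.
  rewrite subnn eqxx ifF; last by apply/negbTE; rewrite -ltnNge addn1.
  by rewrite (IH2 n : Rs 0%N = _) add0r [X in _ - X]addrC subrr.
split.
  by rewrite /Gcoef /= muln0 addn0 addn1 addNr.
split.
  have -> : Gcoef g 1 n = Cnext (- g (n + 1)%N) (- g (n + 2)%N) (- g (n + 3)%N)
      (- g (n + 4)%N) + g (n + 4)%N.
    rewrite /Gcoef /= muln1 addn1 -!addnS addn2.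
    by rewrite (_ : (n + 3 + 1 = n + 4)%N) //; lia.
  rewrite G1alg //.
  - by have := hC 0%N n; rewrite /= oppr_eq0 addn1.
  - by have := hC 0%N n.+1; rewrite /= oppr_eq0 addn2.
rewrite /Fcoef /Hcoef.
have e0 : g (n + 3 * k + 1)%N - Gcoef g k n = - Ccoef g k n by rewrite /Gcoef gsub.
have e1 : g (n + 3 * k + 2)%N - Gcoef g k (n + 1) = - Ccoef g k (n + 1).
  by rewrite /Gcoef (_ : (n + 1 + 3 * k + 1 = n + 3 * k + 2)%N) ?gsub //; lia.
have e2 : g (n + 3 * k + 3)%N - Gcoef g k (n + 2) = - Ccoef g k (n + 2).
  by rewrite /Gcoef (_ : (n + 2 + 3 * k + 1 = n + 3 * k + 3)%N) ?gsub //; lia.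
rewrite e0 e1 e2 {1}/Gcoef [Ccoef g k.+1 n]/= -/(Cnext _ _ _ _) Galg ?hC //.
rewrite /Gcoef (_ : (n + 3 * k.+1 + 1 = n + 3 + 3 * k + 1)%N) //; lia.
Qed.
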